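(* Let $(\Omega,\mathcal F,\mathbb P)$ be a probability space, let $\mathfrak d,N\in\mathbb N$, $a\in\mathbb R$, $b\in(a,\infty)$, $\vartheta\in[a,b]^{\mathfrak d}$, $L,\varepsilon\in(0,\infty)$, let $\mathfrak E\colon[a,b]^{\mathfrak d}\times\Omega\to\mathbb R$ be $(\mathcal B([a,b]^{\mathfrak d})\otimes\mathcal F)/\mathcal B(\mathbb R)$-measurable with $|\mathfrak E(x,\omega)-\mathfrak E(y,\omega)|\le L\|x-y\|_\infty$ for all $x,y\in[a,b]^{\mathfrak d}$, $\omega\in\Omega$, and let $\Theta_n\colon\Omega\to[a,b]^{\mathfrak d}$, $n\in\{1,\dots,N\}$, be i.i.d. random variables with $\Theta_1$ continuous uniformly distributed on $[a,b]^{\mathfrak d}$. Then, writing $\mathfrak E(\Theta_n)$ for $\omega\mapsto\mathfrak E(\Theta_n(\omega),\omega)$, $$\mathbb P\Bigl(\bigl[\min_{n\in\{1,\dots,N\}}\mathfrak E(\Theta_n)\bigr]-\mathfrak E(\vartheta)>\varepsilon\Bigr)\le\exp\Bigl(-N\min\Bigl\{1,\frac{\varepsilon^{\mathfrak d}}{L^{\mathfrak d}(b-a)^{\mathfrak d}}\Bigr\}\Bigr).$$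
   Context: $\|\cdot\|_\infty$ is the maximum norm on $\mathbb R^{\mathfrak d}$. *)

(* Defs.v *)
From HB Require Import structures.
From mathcomp Require Import all_boot all_order all_algebra.
From mathcomp Require Import all_classical all_reals all_analysis.
Set Implicit Arguments.
Unset Strict Implicit.
Unset Printing Implicit Defensive.
Import Order.TTheory GRing.Theory Num.Theory.
Import numFieldNormedType.Exports.
Local Open Scope classical_set_scope.
Local Open Scope ring_scope.

(* Points of R^d are d-tuples; d.-tuple R carries the library's product
   sigma-algebra (generated by the coordinate maps), i.e. B(R^d). *)

Definition cube (R : realType) (d : nat) (a b : R) : set (d.-tuple R) :=
  [set x | forall i : 'I_d, a <= tnth x i <= b].

Definition maxdist (R : realType) (d : nat) (x y : d.-tuple R) : R :=
  \big[Num.max/0]_(i < d) `|tnth x i - tnth y i|.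

Definition box (R : realType) (d : nat) (A : 'I_d -> set R) : set (d.-tuple R) :=
  [set x | forall i : 'I_d, A i (tnth x i)].

(* X is continuous uniformly distributed on [a,b]^d: its law is the
   normalized d-dimensional Lebesgue measure on [a,b]^d, i.e. (as the
   d-fold product of the one-dimensional Lebesgue measure) it agrees on every
   measurable rectangle with prod_i lambda(A_i /\ [a,b]) / (b-a). *)
Definition uniform_on_cube (dO : measure_display) (O : measurableType dO)
  (R : realType) (P : probability O R) (d : nat) (a b : R)
  (X : O -> d.-tuple R) : Prop :=
  forall A : 'I_d -> set R, (forall i, measurable (A i)) ->
    P (X @^-1` box A) =
    (\prod_(i < d) (lebesgue_measure (A i `&` `[a, b]%classic) * ((b - a)^-1)%:E))%E.

Definition independent_family (dO : measure_display) (O : measurableType dO)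
  (R : realType) (P : probability O R) (d N : nat)
  (X : nat -> O -> d.-tuple R) : Prop :=
  forall A : nat -> set (d.-tuple R), (forall n, measurable (A n)) ->
    P (\big[setI/setT]_(1 <= n < N.+1) (X n @^-1` A n)) =
    (\prod_(1 <= n < N.+1) P (X n @^-1` A n))%E.

Definition identically_distributed (dO : measure_display) (O : measurableType dO)
  (R : realType) (P : probability O R) (d N : nat)
  (X : nat -> O -> d.-tuple R) : Prop :=
  forall n, (1 <= n <= N)%N -> forall A : set (d.-tuple R), measurable A ->
    P (X n @^-1` A) = P (X 1%N @^-1` A).

Definition min1N (R : realType) (N : nat) (f : nat -> R) : R :=
  \big[Num.min/f 1%N]_(2 <= n < N.+1) f n.

(* Main.v *)
Set Warnings "-all".
Require Import Defs.
From HB Require Import structures.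
From mathcomp Require Import all_boot all_order all_algebra.
From mathcomp Require Import all_classical all_reals all_analysis.
From mathcomp Require Import measurable_realfun.
From mathcomp Require Import lra.
Import Order.TTheory GRing.Theory Num.Theory.
Import numFieldNormedType.Exports.
Local Open Scope classical_set_scope.
Local Open Scope ring_scope.
Set Implicit Arguments.
Unset Strict Implicit.

Lemma in_bigsetI (T : Type) (I : eqType) (s : seq I) (P : pred I) (F : I -> set T) x :
  (\big[setI/setT]_(i <- s | P i) F i) x <-> (forall i, i \in s -> P i -> F i x).
Proof.
elim: s => [|i s IH]; first by rewrite big_nil; split => // _ j; rewrite in_nil.
rewrite big_cons; case: ifPn => Pi.
  split.
    move=> [Fi /IH H] j; rewrite in_cons => /orP [/eqP -> //|js]; exact: H.
  move=> H; split; first by apply: H; rewrite ?mem_head.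
  by apply/IH => j js; apply: H; rewrite in_cons js orbT.
split.
  move/IH => H j; rewrite in_cons => /orP[/eqP -> Pj|]; [by rewrite Pj in Pi|exact: H].
by move=> H; apply/IH => j js; apply: H; rewrite in_cons js orbT.
Qed.

Lemma box_measurable (R : realType) d (A : 'I_d -> set R) :
  (forall i, measurable (A i)) -> measurable (box A).
Proof.
move=> mA.
have -> : box A = \big[setI/setT]_(i <- enum 'I_d) ((fun x : d.-tuple R => tnth x i) @^-1` A i).
  apply/seteqP; split => x.
    by move=> H; apply/in_bigsetI => i _ _; exact: H.
  by move/in_bigsetI => H i; apply: H => //; rewrite mem_enum.
elim/big_ind: _ => //; first exact: measurableI.
move=> i _; have := @measurable_tnth _ _ _ i measurableT _ (mA i); by rewrite setTI.
Qed.

Lemma bigmin_le_seq (R : realType) (s : seq nat) (idx : R) F n : n \in s ->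
  \big[Num.min/idx]_(i <- s) F i <= F n.
Proof.
elim: s => [//|i s IH]; rewrite in_cons big_cons => /orP[/eqP ->|ns].
  by rewrite ge_min lexx.
by rewrite ge_min IH ?orbT.
Qed.

Lemma bigmin_le_idx (R : realType) (s : seq nat) (idx : R) F :
  \big[Num.min/idx]_(i <- s) F i <= idx.
Proof. by elim: s => [|i s IH]; rewrite ?big_nil // big_cons ge_min IH orbT. Qed.

Lemma min1N_le (R : realType) N (f : nat -> R) n : (1 <= n <= N)%N -> min1N N f <= f n.
Proof.
case/andP; rewrite leq_eqVlt => /orP[/eqP <- _|n1 nN]; first exact: bigmin_le_idx.
by apply: bigmin_le_seq; rewrite mem_index_iota n1 ltnS.
Qed.

Lemma min1N_meas (dO : measure_display) (O : measurableType dO) (R : realType) N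
  (f : nat -> O -> R) : (0 < N)%N -> (forall n, (1 <= n <= N)%N -> measurable_fun setT (f n)) ->
  measurable_fun setT (fun w => min1N N (fun n => f n w)).
Proof.
move=> N0 mf; rewrite /min1N.
have : forall n, n \in index_iota 2 N.+1 -> measurable_fun setT (f n).
  move=> n; rewrite mem_index_iota => /andP[n2 nN]; apply: mf.
  by rewrite ltnS in nN; rewrite nN andbT ltnW.
elim: (index_iota 2 N.+1) => [|i s IH] ms.
  under eq_fun do rewrite big_nil. by apply: mf; rewrite N0.
under eq_fun do rewrite big_cons.
apply: measurable_minr; first by apply: ms; rewrite mem_head.
by apply: IH => n ns; apply: ms; rewrite in_cons ns orbT.
Qed.

Lemma itv_lb (R : realType) (a b t r : R) : a < b -> a <= t <= b -> 0 < r ->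
 ((Num.min r (b - a))%R%:E <= lebesgue_measure (`[(t - r)%R, (t + r)%R]%classic `&` `[a, b]%classic))%E.
Proof.
move=> ab /andP[ta tb] r0.
set m := Num.min r (b - a).
have m0 : 0 < m by rewrite lt_min r0 subr_gt0.
have mr : m <= r by rewrite ge_min lexx.
have mba : m <= b - a by rewrite ge_min lexx orbT.
set c := Num.min t (b - m).
have c1 : c <= t by rewrite ge_min lexx.
have c2 : c <= b - m by rewrite ge_min lexx orbT.
have c3 : a <= c by rewrite /c le_min ta /=; lra.
have c4 : t - r <= c by rewrite /c le_min; apply/andP; split; lra.
have sub : `[c, c + m]%classic `<=` (`[t - r, t + r]%classic `&` `[a, b]%classic).
  move=> x /=; rewrite !in_itv /= => /andP[cx xcm]; split; apply/andP; split.
  - exact: le_trans c4 cx.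
  - by apply: (le_trans xcm); apply: lerD.
  - exact: le_trans c3 cx.
  - by apply: (le_trans xcm); rewrite -lerBrDr.
have := le_measure lebesgue_measure (mem_set (measurable_itv `[c, c + m]))
  (mem_set (measurableI _ _ (measurable_itv `[t - r, t + r]) (measurable_itv `[a, b]))) sub.
move=> H; apply: le_trans H.
have := lebesgue_measure_itv `[c, c + m].
rewrite /= lte_fin ltrDl m0 -EFinD (_ : c + m + - c = m); last by lra.
move=> H; rewrite -H; exact: le_refl.
Qed.

Lemma lee_prod_seq (R : realType) (I : eqType) (s : seq I) (F G : I -> \bar R) :
  (forall i, i \in s -> (0 <= F i)%E /\ (F i <= G i)%E) ->
  (\prod_(i <- s) F i <= \prod_(i <- s) G i)%E.
Proof.
elim: s => [|i s IH] H; first by rewrite !big_nil.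
rewrite !big_cons; have [Fi0 FiG] := H i (mem_head _ _).
apply: lee_pmul => //.
  by rewrite big_seq; apply: prode_ge0 => j js; case: (H j) => //; rewrite in_cons js orbT.
by apply: IH => j js; apply: H; rewrite in_cons js orbT.
Qed.

Lemma cube_measurable (R : realType) (a b : R) d : measurable (cube a b : set (d.-tuple R)).
Proof.
have -> : cube a b = box (fun _ : 'I_d => `[a, b]%classic).
  by apply/seteqP; split => x H i; have := H i; rewrite /= in_itv.
by apply: box_measurable => i; exact: measurable_itv.
Qed.

Unset Implicit Arguments.
Set Strict Implicit.

Theorem lemma3p23 (dO : measure_display) (O : measurableType dO)
  (R : realType) (P : probability O R)
  (d N : nat) (a b : R) (theta : d.-tuple R) (L eps : R)
  (E : d.-tuple R -> O -> R) (Theta : nat -> O -> d.-tuple R) :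
  (0 < d)%N -> (0 < N)%N -> a < b -> cube a b theta -> 0 < L -> 0 < eps ->
  measurable_fun (cube a b `*` [set: O]) (fun p : d.-tuple R * O => E p.1 p.2) ->
  (forall x y, cube a b x -> cube a b y -> forall w,
     `|E x w - E y w| <= L * maxdist x y) ->
  (forall n, (1 <= n <= N)%N -> measurable_fun [set: O] (Theta n)) ->
  (forall n, (1 <= n <= N)%N -> forall w, cube a b (Theta n w)) ->
  independent_family P N Theta ->
  identically_distributed P N Theta ->
  uniform_on_cube P a b (Theta 1%N) ->
  (P [set w | min1N N (fun n => E (Theta n w) w) - E theta w > eps]%R
   <= (expR (- N%:R * Num.min 1 (eps ^+ d / (L ^+ d * (b - a) ^+ d))))%:E)%E.
Proof.
move=> d0 N0 ab cth L0 e0 mE lipE mT cT ind idd unif.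
set r := eps / L.
have r0 : 0 < r by rewrite divr_gt0.
pose B := box (fun i : 'I_d => `[(tnth theta i - r)%R, (tnth theta i + r)%R]%classic).
have mB : measurable B by apply: box_measurable => i; exact: measurable_itv.
have mBc : measurable (~` B) by exact: measurableC.
set q := Num.min 1 (eps ^+ d / (L ^+ d * (b - a) ^+ d)).
have ba0 : 0 < b - a by rewrite subr_gt0.
have q0 : 0 <= q.
  by rewrite le_min ler01 /= divr_ge0 ?exprn_ge0 ?mulr_ge0 ?exprn_ge0 ?ltW.
have q1 : q <= 1 by rewrite ge_min lexx.
have mTB : forall n, (1 <= n <= N)%N -> forall A, measurable A -> measurable (Theta n @^-1` A).
  by move=> n nN A mA; rewrite -[X in measurable X]setTI; apply: mT.
have N1 : (1 <= 1 <= N)%N by rewrite N0.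
have PB : (q%:E <= P (Theta 1%N @^-1` B))%E.
  rewrite unif; last by move=> i; exact: measurable_itv.
  pose p := Num.min r (b - a) / (b - a).
  apply: (@le_trans _ _ (\prod_(i < d) p%:E)%E).
    rewrite prodEFin lee_fin prodr_const card_ord.
    have [rba|rba] := leP r (b - a).
      have -> : p = r / (b - a) by rewrite /p; congr (_ / _); apply/eqP; rewrite eq_le ge_min lexx /= le_min lexx rba.
      by rewrite /r !expr_div_n /q invfM mulrA ge_min lexx orbT.
    have -> : p = 1.
      rewrite /p (_ : Num.min r (b - a) = b - a) ?divff ?gt_eqF //.
      by apply/eqP; rewrite eq_le ge_min lexx orbT /= le_min lexx ltW.
    by rewrite expr1n.
  rewrite -!big_enum /=.
  apply: lee_prod_seq => i _; split; first by rewrite lee_fin divr_ge0 ?ltW // lt_min r0.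
  rewrite /p EFinM; apply: lee_pmul => //; first by rewrite lee_fin ltW // lt_min r0.
    by rewrite lee_fin invr_ge0 ltW.
  by apply: itv_lb => //; exact: cth.
have PBc : forall n, (1 <= n <= N)%N -> (P (Theta n @^-1` ~` B) <= (1 - q)%:E)%E.
  move=> n nN; rewrite idd // -preimage_setC probability_setC; last exact: mTB.
  by rewrite EFinB; apply: leeB.
have mcube := cube_measurable (d:=d) a b.
have mF := measurableX mcube (@measurableT _ O).
have mEn : forall n, (1 <= n <= N)%N -> measurable_fun setT (fun w => E (Theta n w) w).
  move=> n nN.
  have := measurable_comp mF _ mE (measurable_fun_pair (mT n nN) (@measurable_id _ _ setT)).
  apply => _ [w _ <-]; split => //; exact: cT.
have mEt : measurable_fun setT (fun w => E theta w).
  have := measurable_comp mF _ mE (measurable_fun_pair (measurable_cst theta) (@measurable_id _ _ setT)).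
  by apply => _ [w _ <-]; split.
set S := [set w | _].
have mS : measurable S.
  have := measurable_funB (min1N_meas N0 mEn) mEt measurableT (measurable_itv `]eps, +oo[).
  rewrite setTI => H.
  have -> : S = (fun w => min1N N (fun n => E (Theta n w) w) - E theta w) @^-1` `]eps, +oo[.
    by apply/seteqP; split => w; rewrite /S /= in_itv /= andbT.
  exact: H.
set I := \big[setI/setT]_(1 <= n < N.+1) (Theta n @^-1` ~` B).
have mI : measurable I.
  rewrite /I big_seq; elim/big_ind: _ => //; first exact: measurableI.
  by move=> n; rewrite mem_index_iota ltnS => nN; apply: mTB.
have SI : S `<=` I.
  move=> w Sw; apply/in_bigsetI => n; rewrite mem_index_iota ltnS => nN _ /= Bn.
  have h1 := min1N_le (fun n => E (Theta n w) w) nN.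
  have h2 : maxdist (Theta n w) theta <= r.
    rewrite /maxdist; elim/big_ind: _ => //; first exact: ltW.
      by move=> x y xr yr; rewrite ge_max xr yr.
    move=> i _; have := Bn i; rewrite /= in_itv /= => H.
    by rewrite ler_distl.
  have h3 := lipE _ _ (cT n nN w) cth w.
  have h4 := ler_norm (E (Theta n w) w - E theta w).
  have h5 : L * maxdist (Theta n w) theta <= eps.
    have -> : eps = L * r by rewrite /r mulrC divfK ?gt_eqF.
    by rewrite ler_wpM2l // ltW.
  move: Sw; rewrite /S /=; lra.
apply: (le_trans (le_measure _ (mem_set mS) (mem_set mI) SI)).
have e := ind (fun=> ~` B) (fun=> mBc).
have e2 : (P I = \prod_(1 <= n < N.+1) P (Theta n @^-1` ~` B))%E by exact: e.
change (P I <= (expR (- N%:R * q))%:E)%E.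
rewrite e2.
apply: (@le_trans _ _ (\prod_(1 <= n < N.+1) (1 - q)%:E)%E).
  apply: lee_prod_seq => n; rewrite mem_index_iota ltnS => nN; split => //.
  exact: PBc.
rewrite prodEFin prodr_const_nat subn1 /= lee_fin.
rewrite mulNr -mulrN expRM_natl.
apply: lerXn2r; rewrite ?nnegrE ?subr_ge0 ?expR_ge0 //.
by have := expR_ge1Dx (- q).
Qed.
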